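(* Let $(\mathcal{C},P)$ be a $\Pi$-doctrine with full comprehension which is also a restricted $\Pi(\mathcal{C}_P)$-doctrine. For every $A$ and $\phi,\psi\in P(A)$ put $\phi\rightarrow\psi:=\Pi_{\lfloor\phi\rfloor}\lfloor\phi\rfloor^*\psi$. Then with this operation $(\mathcal{C},P)$ is implicational.
   Context: A doctrine is a pair $(\mathcal{C},P)$ where $\mathcal{C}$ is a category with finite products and $P:\mathcal{C}^{op}\to\mathbf{Pos}$ is a functor; write $f^*=P(f)$. For $u:X\to A$, a right adjoint $u^*\dashv\Pi_u$ is a monotone $\Pi_u:P(X)\to P(A)$ with $u^*\Pi_u\alpha\le\alpha$ and $\beta\le\Pi_u u^*\beta$. For a pullback-stable class $\mathcal{A}$ of arrows, $(\mathcal{C},P)$ is a $\Pi(\mathcal{A})$-doctrine if for every $f:A\to B$ in $\mathcal{A}$, $f^*$ has a right adjoint $\Pi_f$ and for every pullback square $h\circ g=f\circ k$ (with $g:Y\to X$, $k:Y\to A$, $h:X\to B$) one has $h^*\Pi_f\gamma=\Pi_g k^*\gamma$ for all $\gamma\in P(A)$ (Beck–Chevalley); it is a restricted $\Pi(\mathcal{A})$-doctrine if this is only required for $\gamma=f^*\xi$, $\xi\in P(B)$. A $\Pi$-doctrine is a $\Pi(Prj)$-doctrine, where $Prj$ is the class of product projections $X\to A$ with $A$ a factor of $X$. Comprehension: every $P(A)$ has a top $\top_A$ and for each $\alpha\in P(A)$ there is $\lfloor\alpha\rfloor:\{\alpha\}\to A$ with $\lfloor\alpha\rfloor^*\alpha=\top_{\{\alpha\}}$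 such that every $f:Y\to A$ with $f^*\alpha=\top_Y$ factors uniquely through $\lfloor\alpha\rfloor$; it is full if whenever $\lfloor\alpha\rfloor$ factors through $\lfloor\beta\rfloor$ then $\alpha\le\beta$. $\mathcal{C}_P$ is the (pullback-stable) class of arrows of the form $\lfloor\alpha\rfloor$. A doctrine is implicational if for every $A$ there is an operation $\rightarrow:P(A)\times P(A)\to P(A)$ such that: (ii) $f^*(\alpha\rightarrow\beta)=f^*\alpha\rightarrow f^*\beta$ for every $f:X\to A$; (iii) for every projection $\pi_A:X\times A\to A$, $\Pi_{\pi_A}(\pi_A^*\alpha\rightarrow\beta)=\alpha\rightarrow\Pi_{\pi_A}\beta$ for all $\alpha\in P(A)$, $\beta\in P(X\times A)$; (iv) for all $\gamma,\phi,\psi\in P(A)$: (a) $\phi\le\psi\rightarrow\phi$; (b) $\gamma\rightarrow(\phi\rightarrow\psi)\le(\gamma\rightarrow\phi)\rightarrow(\gamma\rightarrow\psi)$; (c) if $\gamma\le\phi\rightarrow\psi$ and $\gamma\le\phi$ then $\gamma\le\psi$; (d) if $\phi\le\psi$ then $\gamma\le\phi\rightarrow\psi$. *)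

(* Defs.v *)
Record Cat := {
  Ob :> Type;
  Hom : Ob -> Ob -> Type;
  idm : forall A, Hom A A;
  comp : forall A B C, Hom B C -> Hom A B -> Hom A C;
  comp_id_l : forall A B (f : Hom A B), comp A B B (idm B) f = f;
  comp_id_r : forall A B (f : Hom A B), comp A A B f (idm A) = f;
  comp_assoc : forall A B C D (f : Hom A B) (g : Hom B C) (h : Hom C D),
      comp A C D h (comp A B C g f) = comp A B D (comp B C D h g) f
}.
Arguments idm {c} A.
Arguments comp {c A B C} _ _.

Definition IsProduct {C : Cat} {X A B : C} (p1 : Hom C X A) (p2 : Hom C X B) : Prop :=
  forall (Z : C) (u : Hom C Z A) (v : Hom C Z B),
    exists! w : Hom C Z X, comp p1 w = u /\ comp p2 w = v.

Definition IsTerminal {C : Cat} (T : C) : Prop :=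
  forall Z : C, exists! w : Hom C Z T, True.

Definition HasFiniteProducts (C : Cat) : Prop :=
  (exists T : C, IsTerminal T) /\
  (forall A B : C, exists (X : C) (p1 : Hom C X A) (p2 : Hom C X B), IsProduct p1 p2).

Definition IsPullback {C : Cat} {Y X A B : C}
  (g : Hom C Y X) (k : Hom C Y A) (h : Hom C X B) (f : Hom C A B) : Prop :=
  comp h g = comp f k /\
  forall (Z : C) (u : Hom C Z X) (v : Hom C Z A), comp h u = comp f v ->
    exists! w : Hom C Z Y, comp g w = u /\ comp k w = v.

Record Doctrine (C : Cat) := {
  PA : C -> Type;
  leq : forall A, PA A -> PA A -> Prop;
  leq_refl : forall A (a : PA A), leq A a a;
  leq_trans : forall A (a b c : PA A), leq A a b -> leq A b c -> leq A a c;
  leq_antisym : forall A (a b : PA A), leq A a b -> leq A b a -> a = b;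
  reix : forall X A : C, Hom C X A -> PA A -> PA X;
  reix_mono : forall X A (f : Hom C X A) (a b : PA A),
      leq A a b -> leq X (reix X A f a) (reix X A f b);
  reix_id : forall A (a : PA A), reix A A (idm A) a = a;
  reix_comp : forall X Y Z (f : Hom C X Y) (g : Hom C Y Z) (a : PA Z),
      reix X Z (comp g f) a = reix X Y f (reix Y Z g a)
}.
Arguments PA {C} d A.
Arguments leq {C d A} _ _.
Arguments reix {C d X A} _ _.

Definition PiOp {C : Cat} (D : Doctrine C) :=
  forall X A : C, Hom C X A -> PA D X -> PA D A.

Definition IsRightAdj {C : Cat} {D : Doctrine C} {X A : C} (u : Hom C X A)
  (Pu : PA D X -> PA D A) : Prop :=
  (forall a b, leq a b -> leq (Pu a) (Pu b)) /\
  (forall alpha, leq (reix u (Pu alpha)) alpha) /\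
  (forall beta, leq beta (Pu (reix u beta))).

Definition ArrowClass (C : Cat) := forall X A : C, Hom C X A -> Prop.

Definition Prj (C : Cat) : ArrowClass C :=
  fun X A f => exists (B : C) (g : Hom C X B), IsProduct f g.

Definition IsPiDoctrineFor {C : Cat} {D : Doctrine C} (Pi : PiOp D) (cls : ArrowClass C) : Prop :=
  (forall X A (f : Hom C X A), cls X A f -> IsRightAdj f (Pi X A f)) /\
  (forall (Y X A B : C) (g : Hom C Y X) (k : Hom C Y A) (h : Hom C X B) (f : Hom C A B),
      cls A B f -> IsPullback g k h f ->
      forall gamma : PA D A, reix h (Pi A B f gamma) = Pi Y X g (reix k gamma)).

Definition IsRestrictedPiDoctrineFor {C : Cat} {D : Doctrine C} (Pi : PiOp D) (cls : ArrowClass C) : Prop :=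
  (forall X A (f : Hom C X A), cls X A f -> IsRightAdj f (Pi X A f)) /\
  (forall (Y X A B : C) (g : Hom C Y X) (k : Hom C Y A) (h : Hom C X B) (f : Hom C A B),
      cls A B f -> IsPullback g k h f ->
      forall xi : PA D B, reix h (Pi A B f (reix f xi)) = Pi Y X g (reix k (reix f xi))).

Definition IsTopFamily {C : Cat} {D : Doctrine C} (top : forall A, PA D A) : Prop :=
  (forall A (a : PA D A), leq a (top A)) /\
  (forall X A (f : Hom C X A), reix f (top A) = top X).

(** Comprehension: cmp A alpha = {alpha}, cmpArr A alpha = floor(alpha) : {alpha} -> A *)
Definition IsComprehension {C : Cat} {D : Doctrine C} (top : forall A, PA D A)
  (cmp : forall A : C, PA D A -> C) (cmpArr : forall A alpha, Hom C (cmp A alpha) A) : Prop :=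
  (forall A (alpha : PA D A), reix (cmpArr A alpha) alpha = top (cmp A alpha)) /\
  (forall A (alpha : PA D A) (Y : C) (f : Hom C Y A), reix f alpha = top Y ->
     exists! h : Hom C Y (cmp A alpha), f = comp (cmpArr A alpha) h).

Definition IsFullComprehension {C : Cat} {D : Doctrine C}
  (cmp : forall A : C, PA D A -> C) (cmpArr : forall A alpha, Hom C (cmp A alpha) A) : Prop :=
  forall A (alpha beta : PA D A) (h : Hom C (cmp A alpha) (cmp A beta)),
    cmpArr A alpha = comp (cmpArr A beta) h -> leq alpha beta.

(** C_P: arrows of the form floor(alpha). *)
Definition CompClass {C : Cat} {D : Doctrine C}
  (cmp : forall A : C, PA D A -> C) (cmpArr : forall A alpha, Hom C (cmp A alpha) A) : ArrowClass C :=
  fun X A f => exists alpha : PA D A,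
    existT (fun Y : C => Hom C Y A) X f = existT (fun Y : C => Hom C Y A) (cmp A alpha) (cmpArr A alpha).

Definition IsImplicational {C : Cat} {D : Doctrine C} (Pi : PiOp D)
  (imp : forall A, PA D A -> PA D A -> PA D A) : Prop :=
  (forall X A (f : Hom C X A) (a b : PA D A), reix f (imp A a b) = imp X (reix f a) (reix f b)) /\
  (forall (X A Y : C) (pX : Hom C Y X) (pA : Hom C Y A), IsProduct pX pA ->
     forall (a : PA D A) (b : PA D Y),
       Pi Y A pA (imp Y (reix pA a) b) = imp A a (Pi Y A pA b)) /\
  (forall A (g p q : PA D A),
     leq p (imp A q p) /\
     leq (imp A g (imp A p q)) (imp A (imp A g p) (imp A g q)) /\
     (leq g (imp A p q) -> leq g p -> leq g q) /\
     (leq p q -> leq g (imp A p q))).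

(* Main.v *)
Require Import Defs.

Theorem mainTheorem2 :
  forall (C : Cat) (D : Doctrine C) (Pi : PiOp D)
         (top : forall A, PA D A) (cmp : forall A : C, PA D A -> C)
         (cmpArr : forall A alpha, Hom C (cmp A alpha) A),
    HasFiniteProducts C ->
    IsTopFamily top ->
    IsComprehension top cmp cmpArr ->
    IsFullComprehension cmp cmpArr ->
    IsPiDoctrineFor Pi (@Prj C) ->
    IsRestrictedPiDoctrineFor Pi (CompClass cmp cmpArr) ->
    IsImplicational Pi
      (fun A phi psi => Pi (cmp A phi) A (cmpArr A phi) (reix (cmpArr A phi) psi)).
Proof.
  intros C D Pi top cmp c HFP [Htop Htopr] [Hc1 Hc2] Hfull [HPadj HPbc] [HCadj HCbc].
  set (imp := fun A (phi psi : PA D A) => Pi (cmp A phi) A (c A phi) (reix (c A phi) psi)).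
  change (IsImplicational Pi imp).
  set (T := fun Z A (m : Hom C Z A) (a : PA D A) => reix m a = top Z).
  assert (Ttop : forall A (a : PA D A), leq (top A) a -> a = top A).
  { intros. apply leq_antisym; auto. }
  assert (Tle : forall Z A (m : Hom C Z A) (a b : PA D A), leq a b -> T Z A m a -> T Z A m b).
  { intros Z A m a b Hab Ha. unfold T in *. apply Ttop; auto. rewrite <- Ha. apply reix_mono; auto. }
  assert (Tcomp : forall Z W A (m : Hom C Z A) (n : Hom C W Z) (a : PA D A),
             T Z A m a -> T W A (comp m n) a).
  { intros. unfold T in *. rewrite reix_comp, H. apply Htopr. }
  assert (Cadj : forall A alpha, IsRightAdj (c A alpha) (Pi _ _ (c A alpha))).
  { intros. apply HCadj. exists alpha. reflexivity. }
  assert (L : forall W (e b : PA D W), T _ _ (c W e) b -> leq e b).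
  { intros W e b H. destruct (Hc2 W b _ (c W e) H) as [h [Hh _]]. eapply Hfull; eauto. }
  assert (CharR : forall A (d a b : PA D A), leq d (imp A a b) ->
            forall Z (m : Hom C Z A), T Z A m d -> T Z A m a -> T Z A m b).
  { intros A d a b Hd Z m Td Ta.
    destruct (Hc2 A a Z m Ta) as [h [Hh _]]. subst m.
    destruct (Cadj A a) as [Hm [Hcu Hun]].
    unfold T in *. rewrite reix_comp in *.
    apply Ttop; auto. rewrite <- Td. apply reix_mono.
    eapply leq_trans. apply reix_mono. apply Hd. apply Hcu. }
  assert (CharL : forall A (d a b : PA D A),
            (forall Z (m : Hom C Z A), T Z A m d -> T Z A m a -> T Z A m b) ->
            leq d (imp A a b)).
  { intros A d a b H.
    destruct (Cadj A a) as [Hm [Hcu Hun]].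
    eapply leq_trans. apply Hun. apply Hm.
    set (e := reix (c A a) d).
    apply L. unfold T. rewrite <- reix_comp. apply H; unfold T; rewrite reix_comp.
    - apply Hc1.
    - rewrite Hc1. apply Htopr. }
  assert (Hii : forall X A (f : Hom C X A) (a b : PA D A),
             reix f (imp A a b) = imp X (reix f a) (reix f b)).
  { intros X A f a b.
    set (c' := c X (reix f a)).
    assert (Tfc : T _ _ (comp f c') a). { unfold T. rewrite reix_comp. apply Hc1. }
    destruct (Hc2 A a _ _ Tfc) as [k [Hk _]].
    assert (mono : forall Z (u v : Hom C Z (cmp A a)), comp (c A a) u = comp (c A a) v -> u = v).
    { intros Z u v Huv.
      assert (Tu : T _ _ (comp (c A a) u) a). { unfold T. rewrite reix_comp, Hc1. apply Htopr. }
      destruct (Hc2 A a _ _ Tu) as [w [_ Hw]].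
      transitivity w; [symmetry|]; apply Hw; auto. }
    assert (PB : IsPullback c' k f (c A a)).
    { split. exact Hk. intros Z u v Huv.
      assert (Tu : T _ _ u (reix f a)).
      { unfold T. rewrite <- reix_comp, Huv, reix_comp, Hc1. apply Htopr. }
      destruct (Hc2 X (reix f a) Z u Tu) as [w [Hw Hwu]].
      exists w. split.
      - split. auto. apply mono. unfold c' in *. rewrite comp_assoc, <- Hk, <- comp_assoc, <- Hw. auto.
      - intros w' [H1 H2]. apply Hwu. auto. }
    unfold imp. rewrite (HCbc _ _ _ _ _ _ _ _ (ex_intro _ a eq_refl) PB b).
    rewrite <- reix_comp, <- Hk, reix_comp. reflexivity. }
  assert (KL : forall Z A (m : Hom C Z A) (a b : PA D A),
             (forall W (n : Hom C W Z), T _ _ (comp m n) a -> T _ _ (comp m n) b) ->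
             T _ _ m (imp A a b)).
  { intros Z A m a b H. unfold T at 1. rewrite Hii. symmetry. apply leq_antisym.
    - apply CharL. intros W n _ Ha. unfold T in *. rewrite <- reix_comp in *. auto.
    - apply Htop. }
  assert (MP : forall Z A (m : Hom C Z A) (a b : PA D A),
             T _ _ m (imp A a b) -> T _ _ m a -> T _ _ m b).
  { intros Z A m a b H H0. exact (CharR A _ a b (leq_refl _ _ _ _) Z m H H0). }
  split; [exact Hii|]. split.
  -
    intros X A Y pX pA HPY a b.
    assert (Hprj : Prj C Y A pA).
    { exists X, pX. intros Z u v. destruct (HPY Z v u) as [w [[H1 H2] Hu]].
      exists w. split. auto. intros w' [H3 H4]. apply Hu. auto. }
    destruct (HPadj _ _ _ Hprj) as [Pm [Pcu Pun]].
    apply leq_antisym.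
    + apply CharL. intros Z m' Td Ta.
      destruct (proj2 HFP Z X) as [P [q1 [q2 HP]]].
      destruct (HPY P q2 (comp m' q1)) as [k [[Hk1 Hk2] _]].
      assert (PB : IsPullback q1 k m' pA).
      { split. auto. intros W u v Huv.
        destruct (HP W u (comp pX v)) as [w [[Hw1 Hw2] Hwu]].
        exists w. split.
        - split. auto.
          destruct (HPY W (comp pX v) (comp pA v)) as [w0 [_ Hw0]].
          transitivity w0; [symmetry|]; apply Hw0.
          + rewrite comp_assoc, Hk1, comp_assoc, Hk2, <- comp_assoc, Hw1. auto.
          + auto.
        - intros w' [H1 H2]. apply Hwu. split. auto.
          rewrite <- H2, comp_assoc, Hk1. auto. }
      assert (Hq1 : Prj C P Z q1). { exists X, q2. exact HP. }
      destruct (HPadj _ _ _ Hq1) as [Qm [Qcu Qun]].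
      unfold T. rewrite (HPbc _ _ _ _ _ _ _ _ Hprj PB b).
      apply Ttop. eapply leq_trans. apply Qun. apply Qm. rewrite Htopr.
      assert (Hd : leq (reix pA (Pi Y A pA (imp Y (reix pA a) b))) (imp Y (reix pA a) b)) by apply Pcu.
      assert (Tkb : T _ _ k b).
      { eapply CharR. exact Hd.
        - unfold T in *. rewrite <- reix_comp, Hk2, reix_comp, Td. apply Htopr.
        - unfold T in *. rewrite <- reix_comp, Hk2, reix_comp, Ta. apply Htopr. }
      unfold T in Tkb. rewrite Tkb. apply leq_refl.
    + eapply leq_trans. apply Pun. apply Pm.
      apply CharL. intros Z m Td Ta.
      assert (T1 : T _ _ (comp pA m) (imp A a (Pi Y A pA b))).
      { unfold T in *. rewrite reix_comp. auto. }
      assert (T2 : T _ _ (comp pA m) a).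
      { unfold T in *. rewrite reix_comp. auto. }
      pose proof (MP _ _ _ _ _ T1 T2) as T3.
      eapply Tle. apply Pcu. unfold T in *. rewrite <- reix_comp. exact T3.
  - intros A g p q. split; [|split; [|split]].
    + apply CharL. auto.
    + apply CharL. intros Z m H1 H2. apply KL. intros W n Hg.
      eapply MP. eapply MP. apply Tcomp. exact H1. exact Hg.
      eapply MP. apply Tcomp. exact H2. exact Hg.
    + intros H1 H2. apply L. eapply CharR. exact H1. apply Hc1.
      eapply Tle. exact H2. apply Hc1.
    + intros H. apply CharL. intros Z m _ Hp. eapply Tle; eauto.
Qed.
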